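(* Let $\mathcal X$ be finite, $P_0,P_1$ distributions on $\mathcal X$ with full support, $\gamma>0$ and $\alpha>0$. Define $$\theta_0^{\rm dist}=\frac2\alpha\max_{Q:\,D(Q\|P_0)=\gamma}\mathrm{Var}_{P_0}\Big(\frac{Q(X)}{P_0(X)}\Big),\qquad \theta_0^{\rm adv}=\frac2\alpha\max_{\hat Q:\,D(\hat Q\|P_0)=\gamma}\mathrm{Var}_{\hat Q}\Big(\log\frac{\hat Q(X)}{P_0(X)}\Big).$$ Then $\theta_0^{\rm adv}\le\theta_0^{\rm dist}$.
   Context: $D$ is relative entropy. $\theta_0^{\rm dist}$ is the sensitivity of the type-I error exponent of Hoeffding's generalized likelihood ratio test (decide 1 iff the observation type $\hat T$ satisfies $D(\hat T\|P_0)\ge\gamma$) to mismatch in the test distribution within a divergence ball, and $\theta_0^{\rm adv}$ its sensitivity to adversarial perturbation of the observation type within a divergence ball; $\alpha$ is the order of the Rényi divergence or $f''(1)$ for the $f$-divergence used to define the balls. *)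

(* Defs.v *)
From HB Require Import structures.
From mathcomp Require Import all_boot all_order all_algebra.
From mathcomp Require Import all_classical all_reals all_analysis.
Set Implicit Arguments. Unset Strict Implicit. Unset Printing Implicit Defensive.
Import Order.TTheory GRing.Theory Num.Theory.
Local Open Scope classical_set_scope.
Local Open Scope ring_scope.

Definition is_dist (R : realType) (X : finType) (P : {ffun X -> R}) : Prop :=
  (forall x, 0 <= P x) /\ \sum_(x : X) P x = 1.

Definition full_support (R : realType) (X : finType) (P : {ffun X -> R}) : Prop :=
  forall x, 0 < P x.

Definition relent (R : realType) (X : finType) (Q P : {ffun X -> R}) : R :=
  \sum_(x : X) (if Q x == 0 then 0 else Q x * ln (Q x / P x)).

Definition expect (R : realType) (X : finType) (P : {ffun X -> R}) (g : X -> R) : R :=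
  \sum_(x : X) P x * g x.

Definition variance (R : realType) (X : finType) (P : {ffun X -> R}) (g : X -> R) : R :=
  \sum_(x : X) P x * (g x - expect P g) ^+ 2.

Definition theta_dist (R : realType) (X : finType) (P0 : {ffun X -> R}) (gamma alpha : R) : R :=
  2 / alpha * sup [set v | exists Q : {ffun X -> R},
     [/\ is_dist Q, relent Q P0 = gamma & v = variance P0 (fun x => Q x / P0 x)]].

Definition theta_adv (R : realType) (X : finType) (P0 : {ffun X -> R}) (gamma alpha : R) : R :=
  2 / alpha * sup [set v | exists Q : {ffun X -> R},
     [/\ is_dist Q, relent Q P0 = gamma & v = variance Q (fun x => ln (Q x / P0 x))]].

(* Main.v *)
Require Import Defs.
From HB Require Import structures.
From mathcomp Require Import all_boot all_order all_algebra.
From mathcomp Require Import all_classical all_reals all_analysis.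
From mathcomp Require Import lra ring.
Import Order.TTheory GRing.Theory Num.Theory.
Local Open Scope classical_set_scope.
Local Open Scope ring_scope.

Lemma ln_le_sub1 (R : realType) (y : R) : 0 < y -> ln y <= y - 1.
Proof.
move=> y0; have := @le_ln1Dx R (y - 1).
rewrite addrCA subrr addr0; apply; lra.
Qed.

Lemma dfl (R : realType) (t : R) : 0 < t ->
  is_derive t 1 (fun t : R => t ^+ 2 - 1 - 2 * t * ln t) (2 * t - 2 * (ln t + 1)).
Proof.
move=> t0.
have eF : (fun t : R => t ^+ 2 - 1 - 2 * t * ln t) =
   ((id : R -> R) * id - cst 1 - ((2:R) *: (id : R -> R)) * (@ln R))%R.
  by apply/funext => u /=; rewrite expr2.
rewrite eF.
have hl := is_derive1_ln t0.
apply: is_derive_eq.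
have tn0 : t != 0 by rewrite gt_eqF.
change (t * 1 + t * 1 - 0 - ((2 * t) * t^-1 + ln t * (2 * 1)) = 2 * t - 2 * (ln t + 1)).
rewrite mulfK //; ring.
Qed.

Lemma key_s (R : realType) (s : R) : 1 <= s -> 2 * s * ln s <= s ^+ 2 - 1.
Proof.
move=> s1.
pose f := fun t : R => t ^+ 2 - 1 - 2 * t * ln t.
have df : forall t : R, 0 < t -> is_derive t 1 f (2 * t - 2 * (ln t + 1)).
  by move=> t t0; apply: dfl.
have H1 : forall x, x \in `]1, s[ -> derivable f x 1.
  move=> x; rewrite in_itv/= => /andP[x1 _]. 
  apply: ex_derive; apply: df; exact: lt_trans ltr01 x1.
have H2 : forall x, x \in `]1, s[ -> 0 <= derive1 f x.
  move=> x; rewrite in_itv/= => /andP[x1 _].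
  have hd := df x (lt_trans ltr01 x1).
  rewrite derive1E (@derive_val _ _ _ _ _ _ _ hd).
  have := @ln_le_sub1 R x (lt_trans ltr01 x1).
  Timeout 10 lra.
have H3 : {in `[1, s], forall x, derivable f x 1}.
  move=> x; rewrite in_itv/= => /andP[x1 _].
  apply: ex_derive; apply: df; exact: lt_le_trans ltr01 x1.
have := @ger0_derive1_ndecr R f 1 s H1 H2 (derivable_within_continuous H3) 1 s (lexx _) s1 (lexx _).
rewrite /f ln1 expr1n. Timeout 10 lra.
Qed.

Lemma key_ge1 (R : realType) (r : R) : 1 <= r -> r * ln r ^+ 2 <= (r - 1) ^+ 2.
Proof.
move=> r1.
have r0 : 0 <= r by apply: le_trans r1.
set s := Num.sqrt r.
have s1 : 1 <= s by rewrite /s -sqrtr1 ler_sqrt.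
have s0 : 0 < s by apply: lt_le_trans s1.
have rs : r = s ^+ 2 by rewrite /s sqr_sqrtr.
have lnr : ln r = ln s *+ 2 by rewrite rs lnXn.
have h := @key_s R s s1.
have l0 : 0 <= 2 * s * ln s by rewrite mulr_ge0 ?ln_ge0 // mulr_ge0 // ltW.
have e1 : r * ln r ^+ 2 = (2 * s * ln s) ^+ 2 by rewrite lnr rs mulr2n; ring.
have e2 : (r - 1) ^+ 2 = (s ^+ 2 - 1) ^+ 2 by rewrite rs.
rewrite e1 e2; nra.
Qed.

Lemma key_r (R : realType) (r : R) : 0 <= r -> r * ln r ^+ 2 <= (r - 1) ^+ 2.
Proof.
move=> r0.
have [r1|r1] := leP 1 r; first exact: (@key_ge1 R r r1).
have [->|rp] := eqVneq r 0; first by rewrite mul0r sub0r sqrrN expr1n ler01.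
have rpos : 0 < r by rewrite lt_neqAle eq_sym rp r0.
have u1 : 1 <= r^-1 by rewrite invf_ge1 // ltW.
have h := @key_ge1 R _ u1.
rewrite lnV ?posrE // sqrrN in h.
have h2 := ler_wpM2l (sqr_ge0 r) h.
have e1 : r ^+ 2 * (r^-1 * ln r ^+ 2) = r * ln r ^+ 2.
  by field; rewrite gt_eqF.
have e2 : r ^+ 2 * (r^-1 - 1) ^+ 2 = (r - 1) ^+ 2.
  by field; rewrite gt_eqF.
by rewrite e1 e2 in h2.
Qed.

Lemma var_alt (R : realType) (X : finType) (Q : {ffun X -> R}) (g : X -> R) :
  \sum_x Q x = 1 ->
  Defs.variance Q g = \sum_x Q x * g x ^+ 2 - Defs.expect Q g ^+ 2.
Proof.
move=> s1; rewrite /Defs.variance.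
set E := Defs.expect Q g.
transitivity (\sum_x (Q x * g x ^+ 2 - (2 * E) * (Q x * g x) + E ^+ 2 * Q x)).
  by apply: eq_bigr => x _; ring.
rewrite big_split /= sumrB -!mulr_sumr s1 -/(Defs.expect Q g) -/E; ring.
Qed.

Lemma var_le (R : realType) (X : finType) (Q : {ffun X -> R}) (g : X -> R) :
  \sum_x Q x = 1 ->
  Defs.variance Q g <= \sum_x Q x * g x ^+ 2.
Proof.
move=> s1; rewrite var_alt //; rewrite lerBlDr lerDl; exact: sqr_ge0.
Qed.

Lemma varP0 (R : realType) (X : finType) (P0 Q : {ffun X -> R}) :
  full_support P0 -> \sum_x Q x = 1 ->
  Defs.variance P0 (fun x => Q x / P0 x) = \sum_x P0 x * (Q x / P0 x - 1) ^+ 2.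
Proof.
move=> fs s1; rewrite /Defs.variance.
have -> : Defs.expect P0 (fun x => Q x / P0 x) = 1.
  rewrite /Defs.expect -s1; apply: eq_bigr => x _.
  by rewrite mulrC divfK // gt_eqF.
by [].
Qed.

Lemma pointwise (R : realType) (X : finType) (P0 Q : {ffun X -> R}) :
  full_support P0 -> is_dist Q ->
  Defs.variance Q (fun x => ln (Q x / P0 x)) <= Defs.variance P0 (fun x => Q x / P0 x).
Proof.
move=> fs [q0 s1].
rewrite varP0 //; apply: le_trans (@var_le _ _ Q _ s1) _.
apply: ler_sum => x _.
have p0 := fs x.
have r0 : 0 <= Q x / P0 x by rewrite divr_ge0 // ltW.
have e : Q x = P0 x * (Q x / P0 x) by rewrite mulrC divfK // gt_eqF.
rewrite {1}e -mulrA ler_pM2l //.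
exact: (@key_r R _ r0).
Qed.

Lemma le1 (R : realType) (X : finType) (Q : {ffun X -> R}) x :
  is_dist Q -> Q x <= 1.
Proof.
move=> [q0 s1]; rewrite -s1 (bigD1 x) //= lerDl.
by apply: sumr_ge0 => y _.
Qed.

Lemma bnd (R : realType) (X : finType) (P0 Q : {ffun X -> R}) :
  full_support P0 -> is_dist Q ->
  Defs.variance P0 (fun x => Q x / P0 x) <= \sum_x ((P0 x)^-1 + P0 x).
Proof.
move=> fs [q0 s1]; rewrite varP0 //.
apply: ler_sum => x _.
have p0 := fs x.
have qx1 := @le1 _ _ Q x (conj q0 s1).
have qx0 := q0 x.
set i := (P0 x)^-1.
have i0 : 0 <= i by rewrite /i invr_ge0 ltW.
have e : P0 x * (Q x * i - 1) ^+ 2 = Q x ^+ 2 * i - 2 * Q x + P0 x.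
  by rewrite /i; field; rewrite gt_eqF.
rewrite e.
have : Q x ^+ 2 * i <= i by rewrite ler_piMl // expr_le1.
lra.
Qed.

Theorem corollary4 (R : realType) (X : finType) (P0 P1 : {ffun X -> R})
  (gamma alpha : R) :
  is_dist P0 -> is_dist P1 -> full_support P0 -> full_support P1 ->
  0 < gamma -> 0 < alpha ->
  theta_adv P0 gamma alpha <= theta_dist P0 gamma alpha.
Proof.
move=> d0 _ fs _ _ a0.
rewrite /theta_adv /theta_dist.
apply: ler_wpM2l; first by rewrite divr_ge0 // ltW.
set A := [set v | _].
set B := [set v | _].
have hB : has_ubound B.
  exists (\sum_x ((P0 x)^-1 + P0 x)) => v [Q [dQ _ ->]].
  exact: (@bnd _ _ P0 Q fs dQ).
have [[Q [dQ rQ]]|nQ] := pselect (exists Q : {ffun X -> R}, is_dist Q /\ relent Q P0 = gamma).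
  apply: ge_sup.
    by exists (Defs.variance Q (fun x => ln (Q x / P0 x))); exists Q.
  move=> v [Q' [dQ' rQ' ->]].
  apply: le_trans (@pointwise _ _ P0 Q' fs dQ') _.
  by apply: ub_le_sup => //; exists Q'.
have -> : A = set0.
  by apply/seteqP; split => // v [Q' [dQ' rQ' _]]; apply: nQ; exists Q'.
have -> : B = set0.
  by apply/seteqP; split => // v [Q' [dQ' rQ' _]]; apply: nQ; exists Q'.
by rewrite sup0.
Qed.
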